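(* Let $x_i,x_j\in\{x_1,\dots,x_n\}$ be adjacent observations, i.e. $x_i<x_j$ and there is no $x'\in\{x_1,\dots,x_n\}$ with $x_i<x'<x_j$. For any $\theta\in\mathbb{V}\cap\Theta$, the result \[\theta^*:=\arg\max_{v\in\mathbb{V}_{D(\theta)}\cap\Theta_1}L(v)\] of a local search over $\mathbb{V}_{D(\theta)}\cap\Theta_1$ has at most two breakpoints between $x_i$ and $x_j$, i.e. $|D(\theta^* )\cap(x_i,x_j)|\le2$.
   Context: Let $f$ be a probability density on $\mathbb{R}_{\ge0}$ satisfying the standing assumptions: (A1) $f$ is continuous and $f(x)>0$ for all $x>0$; (A2) there is $\beta\in\mathbb{R}$ such that for every $\lambda\in\mathbb{R}$, $\int_0^\infty e^{\lambda x}f(x)\,dx<\infty$ if and only if $\lambda<\beta$, and $\lim_{\lambda\to\beta^-}\int_0^\infty e^{\lambda x}f(x)\,dx=\infty$; (A3) for every $\lambda\in\mathbb{R}$, $\int_0^\infty e^{\lambda x}f(x)dx<\infty$ implies $\int_0^\infty x^2e^{\lambda x}f(x)dx<\infty$. Let $M$ be the measure on $\mathbb{R}_{\ge0}$ with density $f$. Fix data $x_1,\dots,x_n$ in $\mathbb{R}_{\ge0}$ with empirical distribution $\hat P=\frac1n\sum_{i=1}^n\delta_{x_i}$. $\Theta$ is the set of convex non-decreasing functions $\theta:\mathbb{R}_{\ge0}\to\mathbb{R}$, and $\Theta_1=\{\theta\in\Theta:\int e^{\theta}dM=1\}$. For $\theta\in\Theta$, $L(\theta):=\int\theta\,d\hat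 P-\int e^{\theta}\,dM+1\in[-\infty,\infty)$. $\mathbb{V}$ is the set of continuous piecewise linear functions $v:\mathbb{R}_{\ge0}\to\mathbb{R}$ with finitely many breakpoints; $D(v)=\{\tau\ge0: v'(\tau-)\neq v'(\tau+)\}$ is its set of breakpoints; for finite $S\subset\mathbb{R}_{\ge0}$, $\mathbb{V}_S=\{v\in\mathbb{V}:D(v)\subseteq S\}$. *)

(* Defs.v *)
From HB Require Import structures.
From mathcomp Require Import all_boot all_order all_algebra.
From mathcomp Require Import all_classical all_reals all_analysis.
Set Implicit Arguments. Unset Strict Implicit. Unset Printing Implicit Defensive.
Import Order.TTheory GRing.Theory Num.Theory.
Import numFieldNormedType.Exports.
Local Open Scope classical_set_scope.
Local Open Scope ring_scope.

Section Defs.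
Variable R : realType.

Definition Rge0 : set R := `[0%R, +oo[%classic.

(* Functions on R_{>=0} are represented as functions R -> R; only their
   values on [0, +oo[ matter for every notion below. *)

(* integral w.r.t. the measure M with density f on R_{>=0} *)
Definition intM (f : R -> R) (g : R -> R) : \bar R :=
  (\int[lebesgue_measure]_(x in Rge0) (g x * f x)%:E)%E.

Definition is_density (f : R -> R) : Prop :=
  measurable_fun Rge0 f /\
  (forall x, 0 <= x -> 0 <= f x) /\
  (\int[lebesgue_measure]_(x in Rge0) (f x)%:E = 1)%E.

Definition A1 (f : R -> R) : Prop :=
  {within Rge0, continuous f} /\ (forall x, 0 < x -> 0 < f x).

Definition mgf (f : R -> R) (lam : R) : \bar R := intM f (fun x => expR (lam * x)).

Definition A2 (f : R -> R) : Prop :=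
  exists beta : R,
    (forall lam : R, (mgf f lam < +oo)%E <-> lam < beta) /\
    (mgf f @ beta^'- --> +oo%E).

Definition A3 (f : R -> R) : Prop :=
  forall lam : R, (mgf f lam < +oo)%E ->
    (intM f (fun x => (x ^+ 2 * expR (lam * x))%R) < +oo)%E.

Definition Theta : set (R -> R) :=
  [set th | (forall x y t, 0 <= x -> 0 <= y -> 0 <= t <= 1 ->
               th (t * x + (1 - t) * y) <= t * th x + (1 - t) * th y) /\
            (forall x y, 0 <= x -> x <= y -> th x <= th y)].

Definition Theta1 (f : R -> R) : set (R -> R) :=
  [set th | Theta th /\ intM f (fun x => expR (th x)) = 1%E].

(* L(theta) = int theta dPhat - int e^theta dM + 1, with Phat the empirical
   distribution of the data x : 'I_n -> R *)
Definition Lik (f : R -> R) (n : nat) (x : 'I_n -> R) (th : R -> R) : \bar R :=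
  ((n%:R^-1 * \sum_(i < n) th (x i))%:E - intM f (fun t => expR (th t)) + 1)%E.

Definition rderiv_is (v : R -> R) (tau l : R) : Prop :=
  (fun h => (v (tau + h) - v tau) / h) @ 0^'+ --> l.
Definition lderiv_is (v : R -> R) (tau l : R) : Prop :=
  (fun h => (v tau - v (tau - h)) / h) @ 0^'+ --> l.

(* D(v): set of breakpoints (v'(tau-) <> v'(tau+)); tau = 0 has no left
   derivative on R_{>=0} and is never counted as a breakpoint *)
Definition breakpoints (v : R -> R) : set R :=
  [set tau | 0 < tau /\
     exists l r, lderiv_is v tau l /\ rderiv_is v tau r /\ l != r].

(* V: continuous piecewise linear functions on R_{>=0} with finitely many
   pieces: there is a finite list of knots such that v is affine on every
   interval of R_{>=0} not containing a knot in its interior *)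
Definition Vset : set (R -> R) :=
  [set v | {within Rge0, continuous v} /\
     exists s : seq R, forall a b, 0 <= a -> a < b ->
       (forall t, t \in s -> ~ (a < t < b)) ->
       exists c d : R, forall y, a <= y <= b -> v y = c * y + d].

Definition VS (S : set R) : set (R -> R) :=
  [set v | Vset v /\ breakpoints v `<=` S].

End Defs.

(* Main.v *)
Require Import Defs.
From HB Require Import structures.
From mathcomp Require Import all_boot all_order all_algebra.
From mathcomp Require Import all_classical all_reals all_analysis.
From mathcomp Require Import ring lra measurable_realfun.
Import Order.TTheory GRing.Theory Num.Theory.
Import numFieldNormedType.Exports.
Local Open Scope classical_set_scope.
Local Open Scope ring_scope.
Set Implicit Arguments. Unset Strict Implicit.

Section Conv.
Variable R : realType.
Implicit Types (h v w : R -> R) (P : R -> Prop).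

Definition convon P h := forall x y t, P x -> P y -> 0 <= t <= 1 ->
  h (t * x + (1 - t) * y) <= t * h x + (1 - t) * h y.

Lemma convon_sub P Q h : (forall x, Q x -> P x) -> convon P h -> convon Q h.
Proof. by move=> QP hc x y t Qx Qy t01; apply: hc => //; apply: QP. Qed.

Lemma chord3 P h x y z : convon P h -> P x -> P y -> x < y -> x <= z <= y ->
  (h z - h x) * (y - x) <= (h y - h x) * (z - x).
Proof.
move=> hc Px Py xy /andP[xz zy].
have yx0 : 0 < y - x by rewrite subr_gt0.
pose t := (y - z) / (y - x).
have t01 : 0 <= t <= 1.
  apply/andP; split; first by apply: divr_ge0; lra.
  by rewrite ler_pdivrMr //; lra.
have ze : z = t * x + (1 - t) * y.
  by rewrite /t; field; lra.
have := hc x y t Px Py t01; rewrite -ze => H.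
have e1 : t * (y - x) = y - z by rewrite /t mulrVK // unitfE; lra.
have : h z * (y - x) <= (t * h x + (1 - t) * h y) * (y - x).
  by rewrite ler_pM2r.
have e2 : (t * h x + (1 - t) * h y) * (y - x) = (y - z) * h x + (z - x) * h y.
  have -> : (t * h x + (1 - t) * h y) * (y - x) =
     (t * (y - x)) * h x + ((y - x) - t * (y - x)) * h y by ring.
  rewrite e1; ring.
rewrite e2 => H2; lra.
Qed.


Lemma glue_core h a p B x y t :
  a <= p -> convon (fun x => a <= x <= p) h -> convon B h -> B p ->
  (forall x y, a <= x < p -> B y -> p < y ->
     (h p - h x) * (y - p) <= (h y - h p) * (p - x)) ->
  a <= x <= p -> B y -> p <= y -> 0 <= t <= 1 ->
  h (t * x + (1 - t) * y) <= t * h x + (1 - t) * h y.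
Proof.
move=> ap cA cB Bp K /andP[ax xp] By py /andP[t0 t1].
have [xp'|xp'] := eqVneq x p.
  by rewrite xp'; apply: cB => //; apply/andP.
have {xp'} xp2 : x < p by rewrite lt_neqAle xp' xp.
have [yp'|yp'] := eqVneq y p.
  by rewrite yp'; apply: cA => //; apply/andP; split => //; apply/andP; split => //;
     apply/andP; split.
have {yp'} py2 : p < y by rewrite lt_neqAle eq_sym yp' py.
have Kxy : (h p - h x) * (y - p) <= (h y - h p) * (p - x) by apply: K => //; rewrite ax xp2.
set z := t * x + (1 - t) * y.
have zx : z - x = (1 - t) * (y - x) by rewrite /z; ring.
have yz : y - z = t * (y - x) by rewrite /z; ring.
have [zp|zp] := lerP z p.
  have := @chord3 _ h x p z cA.
  rewrite ax xp le_refl ap /= => /(_ isT isT xp2).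
  have xz : x <= z by rewrite -subr_ge0 zx; apply: mulr_ge0; lra.
  rewrite xz zp /= => /(_ isT) H.
  have K2 : (h p - h x) * (z - x) <= (1 - t) * (h y - h x) * (p - x).
    rewrite zx.
    have : (1 - t) * ((h p - h x) * (y - p)) <= (1 - t) * ((h y - h p) * (p - x)).
      by apply: ler_wpM2l => //; lra.
    nra.
  have H3 : (h z - h x) * (p - x) <= ((1 - t) * (h y - h x)) * (p - x) by lra.
  rewrite ler_pM2r ?subr_gt0 // in H3.
  lra.
have := @chord3 _ h p y z cB Bp By py2.
rewrite (ltW zp) /=.
have zy : z <= y by rewrite -subr_ge0 yz; apply: mulr_ge0; lra.
rewrite zy => /(_ isT) H.
have K2 : t * (h y - h x) * (y - p) <= t * (h y - h p) * (y - x).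
  have : t * ((h p - h x) * (y - p)) <= t * ((h y - h p) * (p - x)) by apply: ler_wpM2l.
  nra.
have H3 : (t * (h y - h x)) * (y - p) <= (h y - h z) * (y - p).
  rewrite -mulrA (mulrC t) in K2.
  have : (h y - h p) * (y - z) <= (h y - h z) * (y - p) by nra.
  rewrite yz; nra.
rewrite ler_pM2r ?subr_gt0 // in H3.
lra.
Qed.

Lemma kglue h a p B m eta :
  a <= p -> convon (fun x => a <= x <= p) h -> convon B h -> B p ->
  (forall y, B y -> p <= y) -> (forall y z, B y -> p <= z <= y -> B z) ->
  (forall x, a <= x < p -> (h p - h x) / (p - x) <= m) -> 0 < eta ->
  (forall y, B y -> p < y < p + eta -> m <= (h y - h p) / (y - p)) ->
  convon (fun x => (a <= x <= p) \/ B x) h.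
Proof.
move=> ap cA cB Bp Bge Bint Hl eta0 Hr.
have K : forall x y, a <= x < p -> B y -> p < y ->
     (h p - h x) * (y - p) <= (h y - h p) * (p - x).
  move=> x y /andP[ax xp] By py.
  pose y' := Num.min y (p + eta / 2).
  have py' : p < y' by rewrite /y' lt_min py /=; lra.
  have y'y : y' <= y by rewrite /y' ge_min lexx.
  have By' : B y' by apply: (Bint y) => //; rewrite (ltW py') y'y.
  have y'e : y' < p + eta.
    have : y' <= p + eta / 2 by rewrite /y' ge_min lexx orbT.
    lra.
  have m1 : (h p - h x) / (p - x) <= m by apply: Hl; rewrite ax xp.
  have m2 : m <= (h y' - h p) / (y' - p) by apply: Hr => //; rewrite py' y'e.
  have c3 := @chord3 _ h p y y' cB Bp By py.
  rewrite (ltW py') y'y /= in c3; have {}c3 := c3 isT.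
  have s3 : (h y' - h p) / (y' - p) <= (h y - h p) / (y - p).
    rewrite ler_pdivrMr ?subr_gt0 // mulrAC ler_pdivlMr ?subr_gt0 //.
  have : (h p - h x) / (p - x) <= (h y - h p) / (y - p) by lra.
  rewrite ler_pdivrMr ?subr_gt0 // mulrAC ler_pdivlMr ?subr_gt0 //.
move=> x y t [Ax|Bx] [Ay|By] t01.
- by apply: cA.
- by apply: glue_core K Ax By (Bge _ By) t01.
- have t01' : 0 <= 1 - t <= 1 by lra.
  have := @glue_core h a p B y x (1 - t) ap cA cB Bp K Ay Bx (Bge _ Bx) t01'.
  have -> : 1 - (1 - t) = t by ring.
  by rewrite addrC [(t * h x + _)]addrC.
- by apply: cB.
Qed.

Lemma conv_affine P v w m q : convon P v ->
  (forall y, P y -> w y = v y + m * y + q) ->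
  (forall x y t, P x -> P y -> 0 <= t <= 1 -> P (t * x + (1 - t) * y)) ->
  convon P w.
Proof.
move=> cv wv Pc x y t Px Py t01.
rewrite !wv //; last by apply: Pc.
have := cv x y t Px Py t01; lra.
Qed.

End Conv.

Section Deriv.
Variable R : realType.
Implicit Types (h v w : R -> R).

Lemma kD1 v p l x : convon (fun x => 0 <= x) v -> lderiv_is v p l -> 0 <= x < p ->
  (v p - v x) / (p - x) <= l.
Proof.
move=> cv hl /andP[x0 xp].
have px : 0 < p - x by rewrite subr_gt0.
apply: (cvgr_to_ge hl).
near=> k.
have k0 : 0 < k by near: k; exact: nbhs_right_gt.
have kp : k < p - x by near: k; exact: nbhs_right_lt.
have := @chord3 _ _ v x p (p - k) cv x0 (le_trans x0 (ltW xp)) xp.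
have -> : (x <= p - k <= p) = true by apply/andP; split; lra.
move=> /(_ isT) H.
rewrite ler_pdivrMr // mulrAC ler_pdivlMr //.
nra.
Unshelve. all: by end_near.
Qed.


Lemma kD2 v p l y : convon (fun x => 0 <= x) v -> lderiv_is v p l -> 0 < p -> p < y ->
  l <= (v y - v p) / (y - p).
Proof.
move=> cv hl p0 py.
have yp : 0 < y - p by rewrite subr_gt0.
apply: (cvgr_to_le hl).
near=> k.
have k0 : 0 < k by near: k; exact: nbhs_right_gt.
have kp : k < p by near: k; exact: nbhs_right_lt.
have := @chord3 _ _ v (p - k) y p cv.
have -> : (p - k <= p <= y) = true by apply/andP; split; lra.
move=> /(_ _ _ _ isT) H.
have {}H := H ltac:(simpl; lra) ltac:(simpl; lra) ltac:(lra).
rewrite ler_pdivrMr // mulrAC ler_pdivlMr //.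
nra.
Unshelve. all: by end_near.
Qed.

Lemma kD3 v p r y : convon (fun x => 0 <= x) v -> rderiv_is v p r -> 0 <= p -> p < y ->
  r <= (v y - v p) / (y - p).
Proof.
move=> cv hr p0 py.
have yp : 0 < y - p by rewrite subr_gt0.
apply: (cvgr_to_le hr).
near=> k.
have k0 : 0 < k by near: k; exact: nbhs_right_gt.
have kp : k < y - p by near: k; exact: nbhs_right_lt.
have := @chord3 _ _ v p y (p + k) cv.
have -> : (p <= p + k <= y) = true by apply/andP; split; lra.
move=> /(_ _ _ _ isT) H.
have {}H := H ltac:(simpl; lra) ltac:(simpl; lra) ltac:(lra).
rewrite ler_pdivrMr // mulrAC ler_pdivlMr //.
rewrite addrAC subrr add0r in H.
nra.
Unshelve. all: by end_near.
Qed.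

Lemma kD4 v p l r : convon (fun x => 0 <= x) v -> lderiv_is v p l -> rderiv_is v p r ->
  0 < p -> l <= r.
Proof.
move=> cv hl hr p0.
apply: (cvgr_to_ge hr).
near=> k.
have k0 : 0 < k by near: k; exact: nbhs_right_gt.
have := kD2 cv hl p0 (y := p + k) ltac:(lra).
by rewrite addrAC subrr add0r.
Unshelve. all: by end_near.
Qed.

Lemma krshift v w p r eta m q : 0 < eta ->
  (forall y, p <= y <= p + eta -> w y = v y + m * y + q) ->
  rderiv_is v p r -> rderiv_is w p (r + m).
Proof.
move=> e0 wv hr.
apply: cvg_trans; last exact: (cvgD hr (cvg_cst m)).
apply: near_eq_cvg.
near=> k.
have k0 : 0 < k by near: k; exact: nbhs_right_gt.
have ke : k < eta by near: k; exact: nbhs_right_lt.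
rewrite /= !wv; [|apply/andP; split; lra|apply/andP; split; lra].
transitivity ((v (p + k) - v p) / k + m); first by [].
field; lra.
Unshelve. all: by end_near.
Qed.

Lemma klshift v w p l eta m q : 0 < eta ->
  (forall y, p - eta <= y <= p -> w y = v y + m * y + q) ->
  lderiv_is v p l -> lderiv_is w p (l + m).
Proof.
move=> e0 wv hl.
apply: cvg_trans; last exact: (cvgD hl (cvg_cst m)).
apply: near_eq_cvg.
near=> k.
have k0 : 0 < k by near: k; exact: nbhs_right_gt.
have ke : k < eta by near: k; exact: nbhs_right_lt.
rewrite /= !wv; [|apply/andP; split; lra|apply/andP; split; lra].
transitivity ((v p - v (p - k)) / k + m); first by [].
field; lra.
Unshelve. all: by end_near.
Qed.

End Deriv.

Section Integ.
Variable R : realType.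

Lemma mRge0 : measurable (@Rge0 R).
Proof. by rewrite /Rge0; exact: measurable_itv. Qed.

Lemma int_pos (G : R -> R) p : measurable_fun (@Rge0 R) G ->
  (forall x, 0 <= x -> 0 <= G x) -> {within (@Rge0 R), continuous G} ->
  0 < p -> 0 < G p ->
  (0 < \int[lebesgue_measure]_(x in @Rge0 R) (G x)%:E)%E.
Proof.
move=> mG G0 cG p0 Gp0.
have Rp : @Rge0 R p by rewrite /Rge0 /= in_itv /= andbT ltW.
have := (subspace_continuousP _ _).1 cG p Rp.
have Gp2 : G p / 2 < G p by lra.
move=> /cvgr_gt /(_ _ Gp2).
rewrite /within /=.
move=> /nbhs_ballP[e /= e0 He].
pose d := Num.min e p / 2.
have md : 0 < Num.min e p by rewrite lt_min e0 p0.
have d0 : 0 < d by rewrite /d; lra.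
have de : d < e.
  have : Num.min e p <= e by rewrite ge_min lexx.
  rewrite /d; lra.
have dp : d < p.
  have : Num.min e p <= p by rewrite ge_min lexx orbT.
  rewrite /d; lra.
have sub : `[p - d, p + d]%classic `<=` @Rge0 R.
  move=> y /=; rewrite !in_itv /= => /andP[h1 h2]; rewrite /Rge0 /= in_itv /= andbT; lra.
have Hb : forall y, `[p - d, p + d]%classic y -> G p / 2 <= G y.
  move=> y yi; have := He y; rewrite /from_subspace => H.
  apply: ltW; apply: H; last exact: sub.
  rewrite -ball_normE /ball_ /=.
  move: yi => /=; rewrite in_itv /= => /andP[h1 h2].
  rewrite ltr_norml; apply/andP; split; lra.
have mf : measurable_fun (@Rge0 R) (EFin \o G) by apply/measurable_EFinP.
pose I : set R := `[p - d, p + d]%classic.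
have mI : measurable I by exact: measurable_itv.
apply: (@lt_le_trans _ _ (\int[lebesgue_measure]_(x in I) (G x)%:E)%E);
  last first.
  apply: (@ge0_subset_integral _ _ _ lebesgue_measure I (@Rge0 R) mI mRge0 (EFin \o G) mf) => //.
  - by move=> x Hx; rewrite /= lee_fin; apply: G0; move: Hx; rewrite /Rge0 /= in_itv /= andbT.
apply: (@lt_le_trans _ _ (\int[lebesgue_measure]_(x in I) (cst (G p / 2)%:E) x)%E).
  rewrite integral_cst //.
  apply: mule_gt0; first by rewrite lte_fin; lra.
  change (0 < @lebesgue_measure R I)%E.
  rewrite /I.
  rewrite lebesgue_measure_itv /= lte_fin.
  have -> : (p - d < p + d) = true by apply/idP; lra.
  rewrite -EFinD lte_fin; lra.
apply: (@ge0_le_integral _ _ _ lebesgue_measure I mI (cst ((G p / 2)%:E)) (EFin \o G)).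
- by move=> x _ /=; rewrite lee_fin; lra.
- exact: measurable_cst.
- exact: (measurable_funS mRge0 sub mf).
- by move=> x Hx; rewrite /= lee_fin; apply: Hb.
Qed.
End Integ.

Section Hat.
Variable R : realType.
Variables t1 t2 t3 : R.
Hypothesis t12 : t1 < t2.
Hypothesis t23 : t2 < t3.

Definition hat (y : R) := Num.max 0 (Num.min ((y - t1)/(t2 - t1)) ((t3 - y)/(t3 - t2))).

Let d1 : 0 < t2 - t1. Proof. by rewrite subr_gt0. Qed.
Let d2 : 0 < t3 - t2. Proof. by rewrite subr_gt0. Qed.

Lemma hat_l y : t1 <= y <= t2 -> hat y = (y - t1) / (t2 - t1).
Proof.
move=> /andP[h1 h2].
have a0 : 0 <= (y - t1) / (t2 - t1) by apply: divr_ge0; lra.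
have a1 : (y - t1) / (t2 - t1) <= 1 by rewrite ler_pdivrMr //; lra.
have b1 : 1 <= (t3 - y) / (t3 - t2) by rewrite ler_pdivlMr //; lra.
rewrite /hat (_ : Num.min _ _ = (y - t1) / (t2 - t1)); last first.
  by apply/min_idPl; apply: le_trans b1.
by apply/max_idPr.
Qed.

Lemma hat_r y : t2 <= y <= t3 -> hat y = (t3 - y) / (t3 - t2).
Proof.
move=> /andP[h1 h2].
have a0 : 0 <= (t3 - y) / (t3 - t2) by apply: divr_ge0; lra.
have a1 : (t3 - y) / (t3 - t2) <= 1 by rewrite ler_pdivrMr //; lra.
have b1 : 1 <= (y - t1) / (t2 - t1) by rewrite ler_pdivlMr //; lra.
rewrite /hat (_ : Num.min _ _ = (t3 - y) / (t3 - t2)); last first.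
  by apply/min_idPr; apply: le_trans b1.
by apply/max_idPr.
Qed.

Lemma hat_out y : y <= t1 \/ t3 <= y -> hat y = 0.
Proof.
move=> H; rewrite /hat; apply/max_idPl.
case: H => H.
  rewrite ge_min; apply/orP; left; apply: mulr_le0_ge0; [lra|rewrite invr_ge0; exact: ltW].
rewrite ge_min; apply/orP; right; apply: mulr_le0_ge0; [lra|rewrite invr_ge0; exact: ltW].
Qed.

Lemma hat_ge0 y : 0 <= hat y.
Proof. by rewrite /hat le_max lexx. Qed.

Lemma hat_t2 : hat t2 = 1.
Proof. by rewrite hat_l ?lexx ?(ltW t12) // divff // gt_eqF. Qed.

Lemma hat_aff a b : a <= b -> ~ (a < t1 < b) -> ~ (a < t2 < b) -> ~ (a < t3 < b) ->
  exists m q, forall y, a <= y <= b -> hat y = m * y + q.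
Proof.
move=> ab n1 n2 n3.
have [bt1|bt1] := lerP b t1.
  exists 0, 0 => y /andP[_ yb]; rewrite hat_out; [ring|left; lra].
have at1 : t1 <= a by case: (lerP t1 a) => // h; exfalso; apply: n1; rewrite h bt1.
have [bt2|bt2] := lerP b t2.
  exists (1 / (t2 - t1)), (- t1 / (t2 - t1)) => y /andP[ay yb].
  rewrite hat_l; last by apply/andP; split; lra.
  field; lra.
have at2 : t2 <= a by case: (lerP t2 a) => // h; exfalso; apply: n2; rewrite h bt2.
have [bt3|bt3] := lerP b t3.
  exists (-1 / (t3 - t2)), (t3 / (t3 - t2)) => y /andP[ay yb].
  rewrite hat_r; last by apply/andP; split; lra.
  field; lra.
have at3 : t3 <= a by case: (lerP t3 a) => // h; exfalso; apply: n3; rewrite h bt3.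
exists 0, 0 => y /andP[ay _]; rewrite hat_out; [ring|right; lra].
Qed.

Lemma hat_cont : continuous hat.
Proof.
move=> y; rewrite /hat.
apply: (@continuous_max R R (fun=> 0)
  (fun y => Num.min ((y - t1)/(t2 - t1)) ((t3 - y)/(t3 - t2)))); first exact: cvg_cst.
apply: (@continuous_min R R (fun y => (y - t1)/(t2 - t1)) (fun y => (t3 - y)/(t3 - t2))).
  apply: cvgM; [apply: cvgB; [exact: cvg_id|exact: cvg_cst]|exact: cvg_cst].
apply: cvgM; [apply: cvgB; [exact: cvg_cst|exact: cvg_id]|exact: cvg_cst].
Qed.

End Hat.

Section Help.
Variable R : realType.
Implicit Types (h v w g f : R -> R).

Lemma cont_expf g f : {within (@Rge0 R), continuous g} -> {within (@Rge0 R), continuous f} ->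
  {within (@Rge0 R), continuous (fun x => expR (g x) * f x)}.
Proof.
move=> cg cf; apply/subspace_continuousP => x Rx.
have cg' := (subspace_continuousP _ _).1 cg x Rx.
have cf' := (subspace_continuousP _ _).1 cf x Rx.
apply: cvgM => //.
exact: (continuous_cvg _ (@continuous_expR R (g x)) cg').
Qed.

Lemma cont_wc v (k : R -> R) (e c : R) : {within (@Rge0 R), continuous v} -> continuous k ->
  {within (@Rge0 R), continuous (fun y => v y - e * k y + c)}.
Proof.
move=> cv ch; apply/subspace_continuousP => x Rx.
have cv' := (subspace_continuousP _ _).1 cv x Rx.
apply: cvgD; last exact: cvg_cst.
apply: cvgB => //.
apply: cvgM; first exact: cvg_cst.
apply: cvg_within_filter. exact: ch.
Qed.

Lemma cont_diff v w f : {within (@Rge0 R), continuous v} -> {within (@Rge0 R), continuous w} ->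
  {within (@Rge0 R), continuous f} ->
  {within (@Rge0 R), continuous (fun x => (expR (v x) - expR (w x)) * f x)}.
Proof.
move=> cv cw cf; apply/subspace_continuousP => x Rx.
have cv' := (subspace_continuousP _ _).1 cv x Rx.
have cw' := (subspace_continuousP _ _).1 cw x Rx.
have cf' := (subspace_continuousP _ _).1 cf x Rx.
apply: cvgM => //; apply: cvgB.
  exact: (continuous_cvg _ (@continuous_expR R (v x)) cv').
exact: (continuous_cvg _ (@continuous_expR R (w x)) cw').
Qed.

Lemma slope_aff v w x p M q : x != p -> w x = v x + M * x + q -> w p = v p + M * p + q ->
  (w p - w x) / (p - x) = (v p - v x) / (p - x) + M.
Proof.
move=> xp -> ->; field; by rewrite subr_eq0 eq_sym.
Qed.

Lemma mono_from_left h t : convon (fun x => 0 <= x) h -> 0 < t ->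
  (forall x y, 0 <= x -> x <= y -> y <= t -> h x <= h y) ->
  forall x y, 0 <= x -> x <= y -> h x <= h y.
Proof.
move=> cv t0 mon x y x0 xy.
case: (lerP (h x) (h y)) => // hyx; exfalso.
have xy2 : x < y by rewrite lt_neqAle xy andbT; apply/eqP => ex; move: hyx; rewrite ex ltxx.
have c1 := @chord3 _ _ h 0 y x cv (lexx 0) (le_trans x0 xy) (le_lt_trans x0 xy2).
rewrite x0 (ltW xy2) /= in c1; have {}c1 := c1 isT.
have hy0 : h y < h 0.
  case: (ltrP (h y) (h 0)) => // H; exfalso.
  have : (h y - h 0) * (x - 0) <= (h y - h 0) * (y - 0) by apply: ler_wpM2l; lra.
  nra.
pose z := Num.min y t.
have z0 : 0 < z by rewrite lt_min t0 andbT; lra.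
have zy : z <= y by rewrite ge_min lexx.
have zt : z <= t by rewrite ge_min lexx orbT.
have c2 := @chord3 _ _ h 0 y z cv (lexx 0) (le_trans x0 xy) (le_lt_trans x0 xy2).
rewrite (ltW z0) zy /= in c2; have {}c2 := c2 isT.
have m0 := mon 0 z (lexx 0) (ltW z0) zt.
have : 0 < (h 0 - h y) * z by apply: mulr_gt0; lra.
nra.
Qed.

Lemma three_pts (B : set R) :
  ~ (exists s : seq R, (size s <= 2)%N /\ B `<=` [set` s]) ->
  exists t1 t2 t3, [/\ B t1, B t2, B t3, t1 < t2 & t2 < t3].
Proof.
move=> H.
have [a Ba] : exists a, B a.
  apply: contrapT => N; apply: H; exists [::]; split => // y By.
  by exfalso; apply: N; exists y.
have [b [Bb ba]] : exists b, B b /\ b != a.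
  apply: contrapT => N; apply: H; exists [:: a]; split => // y By /=.
  rewrite inE; apply: contrapT => /negP ya; apply: N; exists y; split => //.
have [c [Bc ca cb]] : exists c, [/\ B c, c != a & c != b].
  apply: contrapT => N; apply: H; exists [:: a; b]; split => // y By /=.
  rewrite !inE; apply: contrapT => /negP; rewrite negb_or => /andP[ya yb].
  by apply: N; exists y; split.
case: (ltgtP a b) => [ab|ab|eab]; last by rewrite eab eqxx in ba.
all: case: (ltgtP b c) => [bc|bc|ebc]; last by rewrite ebc eqxx in cb.
all: case: (ltgtP a c) => [ac|ac|eac]; last by rewrite eac eqxx in ca.
all: first [ by exists a, b, c | by exists a, c, b | by exists b, a, c
           | by exists b, c, a | by exists c, a, b | by exists c, b, a
           | exfalso; lra ].
Qed.


Lemma avoid3 (t1 t2 t3 tau : R) : tau != t1 -> tau != t2 -> tau != t3 ->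
  exists eta, [/\ 0 < eta, ~ (tau - eta < t1 < tau + eta),
     ~ (tau - eta < t2 < tau + eta) & ~ (tau - eta < t3 < tau + eta)].
Proof.
move=> n1 n2 n3.
pose mm := Num.min `|tau - t1| (Num.min `|tau - t2| `|tau - t3|).
have a1 : 0 < `|tau - t1| by rewrite normr_gt0 subr_eq0.
have a2 : 0 < `|tau - t2| by rewrite normr_gt0 subr_eq0.
have a3 : 0 < `|tau - t3| by rewrite normr_gt0 subr_eq0.
have m1 : mm <= `|tau - t1| by rewrite ge_min lexx.
have m2 : mm <= `|tau - t2| by rewrite !ge_min lexx orbT.
have m3 : mm <= `|tau - t3| by rewrite !ge_min lexx !orbT.
have m0 : 0 < mm by rewrite !lt_min a1 a2 a3.
have nin : forall t, mm <= `|tau - t| -> ~ (tau - mm / 2 < t < tau + mm / 2).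
  move=> t Ht /andP[h1 h2].
  have : `|tau - t| < mm / 2 by rewrite ltr_norml; apply/andP; split; lra.
  lra.
exists (mm / 2); split; [lra|exact: nin|exact: nin|exact: nin].
Qed.

End Help.

Lemma itvc (R : realType) (a b : R) : forall x y t, a <= x <= b -> a <= y <= b -> 0 <= t <= 1 ->
  a <= t * x + (1 - t) * y <= b.
Proof. move=> x y t /andP[? ?] /andP[? ?] /andP[? ?]; apply/andP; split; nra. Qed.

Lemma rayc (R : realType) (a : R) : forall x y t, a <= x -> a <= y -> 0 <= t <= 1 ->
  a <= t * x + (1 - t) * y.
Proof. move=> x y t ? ? /andP[? ?]; nra. Qed.

Lemma conv_wc_l (R : realType) (v : R -> R) (t1 t2 t3 l1 r1 l2 l3 r3 eps c0 : R) :
  convon (fun x => 0 <= x) v -> t1 < t2 -> t2 < t3 -> 0 < t1 ->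
  lderiv_is v t1 l1 -> rderiv_is v t1 r1 -> lderiv_is v t2 l2 ->
  lderiv_is v t3 l3 -> rderiv_is v t3 r3 ->
  0 < eps -> eps <= (r1 - l1) * (t2 - t1) -> eps <= (r3 - l3) * (t3 - t2) ->
  convon (fun x => 0 <= x) (fun y => v y - eps * hat t1 t2 t3 y + c0).
Proof.
move=> cv' t12 t23 t1p hl1 hr1 hl2 hl3 hr3 eps0 eps1 eps3.
have t2p : 0 < t2 by lra.
have d21 : 0 < t2 - t1 by rewrite subr_gt0.
have d32 : 0 < t3 - t2 by rewrite subr_gt0.
pose H := hat t1 t2 t3.
pose wc (c : R) := fun y => v y - eps * H y + c.
have F0 c : forall y, 0 <= y <= t1 -> wc c y = v y + 0 * y + c.
  move=> y /andP[_ yt]; rewrite /wc /H (hat_out t12 t23); [ring|by left].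
have F1 c : forall y, t1 <= y <= t2 ->
    wc c y = v y + (- eps / (t2 - t1)) * y + (eps * t1 / (t2 - t1) + c).
  move=> y yi; rewrite /wc /H (hat_l t12 t23) //; field; lra.
have F2 c : forall y, t2 <= y <= t3 ->
    wc c y = v y + (eps / (t3 - t2)) * y + (- eps * t3 / (t3 - t2) + c).
  move=> y yi; rewrite /wc /H (hat_r t12 t23) //; field; lra.
have F3 c : forall y, t3 <= y -> wc c y = v y + 0 * y + c.
  move=> y yt; rewrite /wc /H (hat_out t12 t23); [ring|by right].
have conv_wc c : convon (fun x => 0 <= x) (wc c).
  have cA0 : convon (fun x => 0 <= x <= t1) (wc c).
    apply: conv_affine (F0 c) (@itvc R 0 t1).
    by apply: convon_sub cv' => y /andP[].
  have cA1 : convon (fun x => t1 <= x <= t2) (wc c).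
    apply: conv_affine (F1 c) (@itvc R t1 t2).
    by apply: convon_sub cv' => y /andP[? ?]; lra.
  have cA2 : convon (fun x => t2 <= x <= t3) (wc c).
    apply: conv_affine (F2 c) (@itvc R t2 t3).
    by apply: convon_sub cv' => y /andP[? ?]; lra.
  have cA3 : convon (fun x => t3 <= x) (wc c).
    apply: conv_affine (F3 c) (@rayc R t3).
    by apply: convon_sub cv' => y ?; lra.
  have cB2 : convon (fun x => t2 <= x) (wc c).
    apply: (@convon_sub R (fun x => (t2 <= x <= t3) \/ t3 <= x)).
      move=> y y2; case: (lerP y t3) => yt; [left; apply/andP; split => // | right; lra].
    apply: (@kglue R (wc c) t2 t3 (fun x => t3 <= x) (l3 + eps / (t3 - t2)) 1) => //.
    - exact: ltW.
    - by move=> y z y3 /andP[? ?]; lra.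
    - move=> y /andP[y2 y3].
      rewrite (@slope_aff R v (wc c) y t3 (eps / (t3 - t2)) (- eps * t3 / (t3 - t2) + c)).
      + have := @kD1 R v t3 l3 y cv' hl3 ltac:(apply/andP; split; lra). lra.
      + by rewrite lt_eqF.
      + by apply: F2; apply/andP; split; lra.
      + by apply: F2; apply/andP; split; lra.
    - move=> y y3 /andP[y3' _].
      rewrite (@slope_aff R v (wc c) t3 y 0 c).
      + have := @kD3 R v t3 r3 y cv' hr3 ltac:(lra) y3'.
        have : eps / (t3 - t2) <= r3 - l3 by rewrite ler_pdivrMr.
        lra.
      + by rewrite lt_eqF.
      + exact: F3.
      + by apply: F3; lra.
  have cB1 : convon (fun x => t1 <= x) (wc c).
    apply: (@convon_sub R (fun x => (t1 <= x <= t2) \/ t2 <= x)).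
      move=> y y2; case: (lerP y t2) => yt; [left; apply/andP; split => // | right; lra].
    apply: (@kglue R (wc c) t1 t2 (fun x => t2 <= x) (l2 - eps / (t2 - t1)) (t3 - t2)) => //.
    - exact: ltW.
    - by move=> y z y3 /andP[? ?]; lra.
    - move=> y /andP[y2 y3].
      rewrite (@slope_aff R v (wc c) y t2 (- eps / (t2 - t1)) (eps * t1 / (t2 - t1) + c)).
      + have := @kD1 R v t2 l2 y cv' hl2 ltac:(apply/andP; split; lra).
        have -> : - eps / (t2 - t1) = - (eps / (t2 - t1)) by rewrite mulNr.
        lra.
      + by rewrite lt_eqF.
      + by apply: F1; apply/andP; split; lra.
      + by apply: F1; apply/andP; split; lra.
    - move=> y y3 /andP[y3' y3''].
      rewrite (@slope_aff R v (wc c) t2 y (eps / (t3 - t2)) (- eps * t3 / (t3 - t2) + c)).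
      + have := @kD2 R v t2 l2 y cv' hl2 t2p y3'.
        have : 0 < eps / (t3 - t2) by apply: divr_gt0.
        have : 0 < eps / (t2 - t1) by apply: divr_gt0.
        lra.
      + by rewrite lt_eqF.
      + by apply: F2; apply/andP; split; lra.
      + by apply: F2; apply/andP; split; lra.
  apply: (@convon_sub R (fun x => (0 <= x <= t1) \/ t1 <= x)).
    move=> y y2; case: (lerP y t1) => yt; [left; apply/andP; split => // | right; lra].
  apply: (@kglue R (wc c) 0 t1 (fun x => t1 <= x) l1 (t2 - t1)) => //.
  - exact: ltW.
  - by move=> y z y3 /andP[? ?]; lra.
  - move=> y /andP[y2 y3].
    rewrite (@slope_aff R v (wc c) y t1 0 c).
    + have := @kD1 R v t1 l1 y cv' hl1 ltac:(apply/andP; split; lra). lra.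
    + by rewrite lt_eqF.
    + by apply: F0; apply/andP; split; lra.
    + by apply: F0; apply/andP; split; lra.
  - move=> y y3 /andP[y3' y3''].
    rewrite (@slope_aff R v (wc c) t1 y (- eps / (t2 - t1)) (eps * t1 / (t2 - t1) + c)).
    + have := @kD3 R v t1 r1 y cv' hr1 ltac:(lra) y3'.
      have : eps / (t2 - t1) <= r1 - l1 by rewrite ler_pdivrMr.
      have -> : - eps / (t2 - t1) = - (eps / (t2 - t1)) by rewrite mulNr.
      lra.
    + by rewrite lt_eqF.
    + by apply: F1; apply/andP; split; lra.
    + by apply: F1; apply/andP; split; lra.
exact: conv_wc c0.
Qed.

Lemma VS_wc_l (R : realType) (S : set R) (v : R -> R) (t1 t2 t3 eps c : R) :
  Vset v -> breakpoints v `<=` S -> S t1 -> S t2 -> S t3 -> t1 < t2 -> t2 < t3 ->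
  VS S (fun y => v y - eps * hat t1 t2 t3 y + c).
Proof.
move=> hVv hbp S1 S2 S3 t12 t23.
pose H := hat t1 t2 t3.
pose wc (c : R) := fun y => v y - eps * H y + c.
change (VS S (wc c)).
  split.
    split; first by apply: cont_wc => //; [case: hVv|apply: hat_cont].
    case: hVv => _ [s Hs].
    exists [:: t1, t2, t3 & s] => a b a0 ab Hk.
    have [cv0 [dv Hv]] := Hs a b a0 ab (fun t ts => Hk t ltac:(by rewrite !inE ts !orbT)).
    have [m [q Hq]] := hat_aff t12 t23 (ltW ab)
       (Hk t1 ltac:(by rewrite inE eqxx)) (Hk t2 ltac:(by rewrite !inE eqxx orbT))
       (Hk t3 ltac:(by rewrite !inE eqxx !orbT)).
    exists (cv0 - eps * m), (dv - eps * q + c) => y yab.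
    by rewrite /wc /H Hv // Hq //; ring.
  move=> tau [tau0 [l [r [hl [hr lr]]]]].
  have [e1|n1] := eqVneq tau t1; first by rewrite e1.
  have [e2|n2] := eqVneq tau t2; first by rewrite e2.
  have [e3|n3] := eqVneq tau t3; first by rewrite e3.
  have [eta [eta0 nt1 nt2 nt3]] := avoid3 n1 n2 n3.
  have [m [q Hq]] := hat_aff t12 t23 (a := tau - eta) (b := tau + eta)
     ltac:(apply: lerD; [exact: lexx|apply: (le_trans _ (ltW eta0)); rewrite oppr_le0; exact: ltW])
     nt1 nt2 nt3.
  have Hvw : forall y, tau - eta <= y <= tau + eta ->
      v y = wc c y + (eps * m) * y + (eps * q - c).
    by move=> y yi; rewrite /wc /H Hq //; ring.
  apply: hbp; split => //; exists (l + eps * m), (r + eps * m); split; [|split].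
  - apply: (klshift (eta := eta) (q := eps * q - c)) hl => // y yi.
    by apply: Hvw; apply/andP; split; lra.
  - apply: (krshift (eta := eta) (q := eps * q - c)) hr => // y yi.
    by apply: Hvw; apply/andP; split; lra.
  - apply: contra lr => /eqP E; apply/eqP; exact: (addIr (eps * m)).
Qed.

Lemma scale_exists (R : realType) (f v w : R -> R) (p : R) :
  {within (@Rge0 R), continuous f} -> (forall x, 0 <= x -> 0 <= f x) -> 0 < f p -> 0 < p ->
  {within (@Rge0 R), continuous v} -> {within (@Rge0 R), continuous w} ->
  (forall x, w x <= v x) -> w p < v p ->
  intM f (fun x => expR (v x)) = 1%E ->
  exists c, 0 < c /\ intM f (fun x => expR (w x + c)) = 1%E.
Proof.
move=> cf f0 fp p0 cv cw wv wvp Iv.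
pose G1 := fun x => expR (w x) * f x.
pose G2 := fun x => (expR (v x) - expR (w x)) * f x.
have cG1 : {within (@Rge0 R), continuous G1} by exact: cont_expf.
have cG2 : {within (@Rge0 R), continuous G2} by exact: cont_diff.
have mG1 : measurable_fun (@Rge0 R) G1 by apply: subspace_continuous_measurable_fun => //; exact: mRge0.
have mG2 : measurable_fun (@Rge0 R) G2 by apply: subspace_continuous_measurable_fun => //; exact: mRge0.
have G10 : forall x, 0 <= x -> 0 <= G1 x by move=> x x0; apply: mulr_ge0; [exact: expR_ge0|exact: f0].
have G20 : forall x, 0 <= x -> 0 <= G2 x.
  move=> x x0; apply: mulr_ge0; [rewrite subr_ge0 ler_expR; exact: wv|exact: f0].
have P1 := int_pos mG1 G10 cG1 p0 (mulr_gt0 (expR_gt0 _) fp).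
have G2p : 0 < G2 p by apply: mulr_gt0 => //; rewrite subr_gt0 ltr_expR.
have P2 := int_pos mG2 G20 cG2 p0 G2p.
have mE1 : measurable_fun (@Rge0 R) (EFin \o G1) by apply/measurable_EFinP.
have mE2 : measurable_fun (@Rge0 R) (EFin \o G2) by apply/measurable_EFinP.
have hsum : (\int[lebesgue_measure]_(x in (@Rge0 R)) ((EFin \o G1) x + (EFin \o G2) x) =
   \int[lebesgue_measure]_(x in (@Rge0 R)) (EFin \o G1) x +
   \int[lebesgue_measure]_(x in (@Rge0 R)) (EFin \o G2) x)%E.
  apply: ge0_integralD => //.
  - exact: mRge0.
  - by move=> x x0; rewrite /= lee_fin; apply: G10; move: x0; rewrite /Rge0 /= in_itv /= andbT.
  - by move=> x x0; rewrite /= lee_fin; apply: G20; move: x0; rewrite /Rge0 /= in_itv /= andbT.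
move: Iv; rewrite /intM.
have -> : (\int[lebesgue_measure]_(x in (@Rge0 R)) (expR (v x) * f x)%:E =
    \int[lebesgue_measure]_(x in (@Rge0 R)) ((EFin \o G1) x + (EFin \o G2) x))%E.
  apply: eq_integral => y _; rewrite /= -EFinD /G1 /G2; congr (_%:E); ring.
rewrite hsum.
move: P1 P2.
case E1 : (\int[lebesgue_measure]_(x in (@Rge0 R)) (EFin \o G1) x)%E => [r1| |] //=;
  case E2 : (\int[lebesgue_measure]_(x in (@Rge0 R)) (EFin \o G2) x)%E => [r2| |] //=.
rewrite !lte_fin => r10 r20 /eqP; rewrite -EFinD eqe => /eqP s12.
have r11 : r1 < 1 by lra.
exists (- ln r1); split.
  by rewrite oppr_gt0; apply: ln_lt0; rewrite r10 r11.
have -> : (\int[lebesgue_measure]_(x in (@Rge0 R)) (expR (w x + - ln r1) * f x)%:E =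
    \int[lebesgue_measure]_(x in (@Rge0 R)) ((expR (- ln r1))%:E * (EFin \o G1) x))%E.
  apply: eq_integral => y _; rewrite /= -EFinM /G1 expRD; congr (_%:E); ring.
rewrite ge0_integralZl_EFin //; first by rewrite E1 -EFinM expRN lnK ?posrE // mulVf // gt_eqF.
all: first [exact: mRge0 | exact: expR_ge0 |
  by move=> x x0; rewrite /= lee_fin; apply: G10; move: x0; rewrite /Rge0 /= in_itv /= andbT].
Qed.

Lemma lik_shift (R : realType) (f : R -> R) n (x : 'I_n -> R) (v w : R -> R) (c : R) :
  (0 < n)%N -> (forall k, w (x k) = v (x k) + c) ->
  intM f (fun t => expR (w t)) = 1%E -> intM f (fun t => expR (v t)) = 1%E ->
  (Lik f x w <= Lik f x v)%E -> c <= 0.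
Proof.
move=> n0 wv Iw Iv; rewrite /Lik Iw Iv.
have -> : \sum_(i < n) w (x i) = \sum_(i < n) v (x i) + c *+ n.
  under eq_bigr => k _ do rewrite wv.
  by rewrite big_split /= sumr_const card_ord.
rewrite -!EFinB -!EFinD lee_fin.
have nn : n%:R != 0 :> R by rewrite pnatr_eq0 -lt0n.
have e : (n%:R)^-1 * (c *+ n) = c :> R by rewrite -[c *+ n]mulr_natr mulrCA mulVf // mulr1.
rewrite mulrDr e.
lra.
Qed.

Unset Implicit Arguments. Set Strict Implicit.

Theorem mainTheorem7 (R : realType) (f : R -> R)
  (hf : is_density f) (hA1 : A1 f) (hA2 : A2 f) (hA3 : A3 f)
  (n : nat) (x : 'I_n -> R) (hx : forall k, 0 <= x k)
  (i j : 'I_n) (hij : x i < x j)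
  (hadj : forall k : 'I_n, ~ (x i < x k < x j))
  (theta : R -> R) (hthV : Vset theta) (hthT : Theta theta)
  (thetas : R -> R)
  (hsmem : (VS (breakpoints theta) `&` Theta1 f) thetas)
  (hsmax : forall v, (VS (breakpoints theta) `&` Theta1 f) v ->
             (Lik f x v <= Lik f x thetas)%E) :
  exists s : seq R, (size s <= 2)%N /\
    breakpoints thetas `&` `]x i, x j[%classic `<=` [set` s].
Proof.
have n0 : (0 < n)%N := leq_ltn_trans (leq0n i) (ltn_ord i).
case: hsmem => [[hVv hbp] [hTv hIv]].
apply: contrapT => Hno.
have [t1 [t2 [t3 [B1 B2 B3 t12 t23]]]] := three_pts Hno.
have bp1 : breakpoints thetas t1 by case: B1.
have bp2 : breakpoints thetas t2 by case: B2.
have bp3 : breakpoints thetas t3 by case: B3.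
case: B1 => [[t1p [l1 [r1 [hl1 [hr1 lr1]]]]] I1].
case: B2 => [[t2p [l2 [r2 [hl2 [hr2 lr2]]]]] I2].
case: B3 => [[t3p [l3 [r3 [hl3 [hr3 lr3]]]]] I3].
move: I1 I2 I3; rewrite /= !in_itv /= => /andP[I1a I1b] /andP[I2a I2b] /andP[I3a I3b].
set v := thetas in hVv hbp hTv hIv hsmax hl1 hr1 hl2 hr2 hl3 hr3 bp1 bp2 bp3 *.
case: hTv => cv vmon.
have cv' : convon (fun x => 0 <= x) v by exact: cv.
have l1r1 : l1 < r1 by rewrite lt_neqAle lr1 (kD4 cv' hl1 hr1 t1p).
have l3r3 : l3 < r3 by rewrite lt_neqAle lr3 (kD4 cv' hl3 hr3 t3p).
have d21 : 0 < t2 - t1 by rewrite subr_gt0.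
have d32 : 0 < t3 - t2 by rewrite subr_gt0.
pose eps := Num.min ((r1 - l1) * (t2 - t1)) ((r3 - l3) * (t3 - t2)).
have eps0 : 0 < eps by rewrite lt_min !mulr_gt0 // subr_gt0.
have eps1 : eps <= (r1 - l1) * (t2 - t1) by rewrite ge_min lexx.
have eps3 : eps <= (r3 - l3) * (t3 - t2) by rewrite ge_min lexx orbT.
pose H := hat t1 t2 t3.
pose wc (c : R) := fun y => v y - eps * H y + c.
have conv_wc c : convon (fun x => 0 <= x) (wc c).
  exact: (@conv_wc_l R v t1 t2 t3 l1 r1 l2 l3 r3 eps c cv' t12 t23 t1p hl1 hr1 hl2 hl3 hr3
    eps0 eps1 eps3).
have F0 c : forall y, 0 <= y <= t1 -> wc c y = v y + c.
  move=> y /andP[_ yt]; rewrite /wc /H (hat_out t12 t23); [ring|by left].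
have Theta_wc c : Theta (wc c).
  split; first exact: conv_wc.
  apply: (mono_from_left (conv_wc c) t1p) => a b a0 ab bt.
  have b0 : 0 <= b := le_trans a0 ab.
  rewrite !F0; [|by rewrite b0|by rewrite a0 (le_trans ab bt)].
  by rewrite lerD2r; apply: vmon.
have VS_wc c : VS (breakpoints theta) (wc c).
  exact: (@VS_wc_l R (breakpoints theta) v t1 t2 t3 eps c hVv hbp (hbp _ bp1) (hbp _ bp2)
    (hbp _ bp3) t12 t23).
have cf : {within (@Rge0 R), continuous f} by case: hA1.
have f0 : forall x, 0 <= x -> 0 <= f x by case: hf => _ [].
have fpos : forall x, 0 < x -> 0 < f x by case: hA1.
have cv0 : {within (@Rge0 R), continuous v} by case: hVv.
have cw0 : {within (@Rge0 R), continuous (wc 0)}.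
  by apply: cont_wc => //; apply: hat_cont.
have wv : forall y, wc 0 y <= v y.
  move=> y; rewrite /wc addr0 lerBlDr lerDl; apply: mulr_ge0; [exact: ltW|exact: hat_ge0].
have wvp : wc 0 t2 < v t2.
  by rewrite /wc /H (hat_t2 t12 t23) mulr1 addr0 ltrBlDr ltrDl.
have [c [c0 Ic]] := scale_exists cf f0 (fpos _ t2p) t2p cv0 cw0 wv wvp hIv.
have Ic' : intM f (fun y => expR (wc c y)) = 1%E.
  by rewrite -Ic; congr (intM f _); apply: funext => y; rewrite /wc addr0.
have wx : forall k, wc c (x k) = v (x k) + c.
  move=> k; rewrite /wc /H (hat_out t12 t23) ?mulr0 ?subr0 //.
  case: (lerP (x k) (x i)) => xki; first by left; exact: (le_trans xki (ltW I1a)).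
  case: (lerP (x j) (x k)) => xkj; first by right; exact: (le_trans (ltW I3b) xkj).
  by exfalso; apply: (hadj k); rewrite xki xkj.
have Hle := hsmax (wc c) (conj (VS_wc c) (conj (Theta_wc c) Ic')).
have := lik_shift n0 wx Ic' hIv Hle.
by rewrite leNgt c0.
Qed.
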